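(* Consider a two-player bilinear game with $f_1(x_1,x_2)=x_1^\top Ax_2$, $f_2(x_1,x_2)=x_1^\top B^\top x_2$, $A\in\mathbb{R}^{n_1\times n_2}$, $B\in\mathbb{R}^{n_2\times n_1}$, step sizes $\gamma_1,\gamma_2>0$, and let $W$ be either $W_s$ (simultaneous gradient play) or $W_a$ (alternating gradient play) as defined in the context. Write $a_{pq}$, $b_{pq}$ for the $(p,q)$ entries of $A$, $B$. (1) If coordinate $x_{2,j}$ is disturbance decoupled from coordinate $x_{1,i}$, then $b_{ji}=0$ and $\sum_{q=1}^{n_2}b_{qi}\sum_{\ell=1}^{n_1}a_{\ell q}b_{j\ell}=0$. (2) If coordinate $x_{1,j}$ is disturbance decoupled from coordinate $x_{2,i}$, then $a_{ji}=0$ and $\sum_{q=1}^{n_1}a_{qi}\sum_{\ell=1}^{n_2}b_{\ell q}a_{j\ell}=0$.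
   Context: Player 1 has action $x_1=(x_{1,1},\ldots,x_{1,n_1})\in\mathbb{R}^{n_1}$, player 2 has $x_2=(x_{2,1},\ldots,x_{2,n_2})\in\mathbb{R}^{n_2}$; the joint vector $x=(x_1,x_2)\in\mathbb{R}^{n_1+n_2}$. Simultaneous gradient play $x_1^{k+1}=x_1^k-\gamma_1Ax_2^k$, $x_2^{k+1}=x_2^k-\gamma_2Bx_1^k$ is the linear iteration $x^{k+1}=W_sx^k$ with $W_s=\begin{bmatrix}I&-\gamma_1A\\-\gamma_2B&I\end{bmatrix}$. Alternating gradient play $x_1^{k+1}=x_1^k-\gamma_1Ax_2^k$, $x_2^{k+1}=x_2^k-\gamma_2Bx_1^{k+1}$ is the linear iteration $x^{k+1}=W_ax^k$ with $W_a=\begin{bmatrix}I&-\gamma_1A\\-\gamma_2B&I+\gamma_1\gamma_2BA\end{bmatrix}$. Each coordinate is treated as a separate scalar player whose game-graph matrix is $W$. For coordinates $p\neq q$ of $\mathbb{R}^{n_1+n_2}$, with $\gamma_{(q)}$ the step size of the player owning coordinate $q$, coordinate $p$ is disturbance decoupled from coordinate $q$ if for every initial $x^0$ and every real sequence $(\delta^k)_{k\ge0}$, the iterations $x^{k+1}=Wx^k$ and $y^{k+1}=Wy^k-\gamma_{(q)}\delta^ke_q$ with $y^0=x^0$ satisfy $y^k_p=x^k_p$ for all $k\ge0$ ($e_q$ the $q$-th standard basis vector). *)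

(* Defs.v *)
From mathcomp Require Import all_boot all_order all_algebra.
Set Implicit Arguments. Unset Strict Implicit. Unset Printing Implicit Defensive.
Import Order.TTheory GRing.Theory Num.Theory.
Local Open Scope ring_scope.

Section Game.
Variables (R : realFieldType) (n1 n2 : nat).

Definition Wsim (g1 g2 : R) (A : 'M[R]_(n1, n2)) (B : 'M[R]_(n2, n1))
  : 'M[R]_(n1 + n2) :=
  block_mx (1%:M : 'M[R]_n1) (- (g1 *: A)) (- (g2 *: B)) (1%:M : 'M[R]_n2).

Definition Walt (g1 g2 : R) (A : 'M[R]_(n1, n2)) (B : 'M[R]_(n2, n1))
  : 'M[R]_(n1 + n2) :=
  block_mx (1%:M : 'M[R]_n1) (- (g1 *: A)) (- (g2 *: B))
           ((1%:M : 'M[R]_n2) + (g1 * g2) *: (B *m A)).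
End Game.

Section Iter.
Variables (R : realFieldType) (n : nat).

Fixpoint lin_iter (W : 'M[R]_n) (x0 : 'cV[R]_n) (k : nat) : 'cV[R]_n :=
  match k with
  | 0 => x0
  | k'.+1 => W *m lin_iter W x0 k'
  end.

Fixpoint dist_iter (W : 'M[R]_n) (x0 : 'cV[R]_n) (q : 'I_n) (gq : R)
  (delta : nat -> R) (k : nat) : 'cV[R]_n :=
  match k with
  | 0 => x0
  | k'.+1 => W *m dist_iter W x0 q gq delta k' - (gq * delta k') *: delta_mx q 0
  end.

(* coordinate p is disturbance decoupled from coordinate q, where gq is the
   step size of the player owning coordinate q *)
Definition dist_decoupled (W : 'M[R]_n) (gq : R) (p q : 'I_n) : Prop :=
  forall (x0 : 'cV[R]_n) (delta : nat -> R) (k : nat),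
    dist_iter W x0 q gq delta k p 0 = lin_iter W x0 k p 0.
End Iter.

(* Main.v *)
Require Import Defs.
From mathcomp Require Import all_boot all_order all_algebra ring.
Import Order.TTheory GRing.Theory Num.Theory.
Local Open Scope ring_scope.

Lemma lin0 (R : realFieldType) n (W : 'M[R]_n) k : lin_iter W 0 k = 0.
Proof. by elim: k => //= k ->; rewrite mulmx0. Qed.

Lemma dd_entries (R : realFieldType) n (W : 'M[R]_n) gq p q :
  gq != 0 -> dist_decoupled W gq p q ->
  [/\ W p q = 0, (W *m W) p q = 0 & (W *m W *m W) p q = 0].
Proof.
move=> gq0 H.
pose d := fun k : nat => if k == 0%N then 1 else (0 : R).
have E k : dist_iter W 0 q gq d k.+1 = - gq *: ((W ^+ k) *m delta_mx q 0).
  elim: k => [|k IH] /=.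
    by rewrite mulmx0 sub0r /d /= mulr1 expr0 mul1mx scaleNr.
  move: IH => /= ->; rewrite /d /= mulr0 scale0r subr0 -scalemxAr mulmxA exprS.
  done.
have F k : (W ^+ k) p q = 0.
  have := H 0 d k.+1; rewrite lin0 E -colE !mxE => /eqP.
  by rewrite mulf_eq0 oppr_eq0 (negPf gq0) /= => /eqP.
split.
- by have := F 1%N; rewrite expr1.
- by have := F 2%N; rewrite expr2.
- by have := F 3%N; rewrite !exprS expr0 mulr1 mulrA.
Qed.

Lemma sumBAB (R : realFieldType) n1 n2 (A : 'M[R]_(n1, n2)) (B : 'M[R]_(n2, n1)) i j :
  (B *m A *m B) j i = \sum_(q < n2) B q i * (\sum_(l < n1) A l q * B j l).
Proof.
rewrite -mulmxA mxE; under eq_bigr => l _ do rewrite mxE big_distrr.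
rewrite exchange_big /=; apply: eq_bigr => q _; rewrite big_distrr /=.
by apply: eq_bigr => l _; ring.
Qed.

Ltac simp := rewrite ?(mulmx1, mul1mx, mulmxN, mulNmx, opprK, mulmxDl, mulmxDr, mulmxA);
  rewrite -?scalemxAl -?scalemxAr ?scalerA -?scalemxAl ?scalerA ?mulmxA.

Theorem corollary4 (R : realFieldType) (n1 n2 : nat)
  (A : 'M[R]_(n1, n2)) (B : 'M[R]_(n2, n1)) (g1 g2 : R)
  (hg1 : 0 < g1) (hg2 : 0 < g2) (W : 'M[R]_(n1 + n2))
  (hW : W = Wsim g1 g2 A B \/ W = Walt g1 g2 A B) :
  (forall (i : 'I_n1) (j : 'I_n2),
     dist_decoupled W g1 (rshift n1 j) (lshift n2 i) ->
     B j i = 0 /\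
     \sum_(q < n2) B q i * (\sum_(l < n1) A l q * B j l) = 0) /\
  (forall (i : 'I_n2) (j : 'I_n1),
     dist_decoupled W g2 (lshift n2 j) (rshift n1 i) ->
     A j i = 0 /\
     \sum_(q < n1) A q i * (\sum_(l < n2) B l q * A j l) = 0).
Proof.
have g10 : g1 != 0 by rewrite gt_eqF.
have g20 : g2 != 0 by rewrite gt_eqF.
split=> i j H.
- rewrite -sumBAB.
  have [h1 h2 h3] := dd_entries _ _ _ _ _ _ g10 H.
  have Bji : B j i = 0.
    move: h1; case: hW => ->; rewrite /Wsim /Walt block_mxEdl !mxE => /eqP;
      by rewrite oppr_eq0 mulf_eq0 (negPf g20) => /eqP.
  split => //.
  case: hW => hW; subst W.
  + move: h3; rewrite /Wsim !mulmx_block block_mxEdl; simp.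
    move: (B *m A *m B) => P; rewrite !mxE Bji => h.
    have : (g2 * g2 * g1) * P j i = 0 by first [ rewrite -h; ring | apply: oppr_inj; rewrite oppr0 -h; ring ].
    by move/eqP; rewrite !mulf_eq0 (negPf g20) (negPf g10) /= => /eqP.
  + move: h2; rewrite /Walt !mulmx_block block_mxEdl; simp.
    move: (B *m A *m B) => P; rewrite !mxE Bji => h.
    have : (g2 * g2 * g1) * P j i = 0 by first [ rewrite -h; ring | apply: oppr_inj; rewrite oppr0 -h; ring ].
    by move/eqP; rewrite !mulf_eq0 (negPf g20) (negPf g10) /= => /eqP.
- rewrite -(sumBAB _ _ _ B A).
  have [h1 h2 h3] := dd_entries _ _ _ _ _ _ g20 H.
  have Aji : A j i = 0.
    move: h1; case: hW => ->; rewrite /Wsim /Walt block_mxEur !mxE => /eqP;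
      by rewrite oppr_eq0 mulf_eq0 (negPf g10) => /eqP.
  split => //.
  case: hW => hW; subst W.
  + move: h3; rewrite /Wsim !mulmx_block block_mxEur; simp.
    move: (A *m B *m A) => P; rewrite !mxE Aji => h.
    have : (g1 * g1 * g2) * P j i = 0 by first [ rewrite -h; ring | apply: oppr_inj; rewrite oppr0 -h; ring ].
    by move/eqP; rewrite !mulf_eq0 (negPf g20) (negPf g10) /= => /eqP.
  + move: h2; rewrite /Walt !mulmx_block block_mxEur; simp.
    move: (A *m B *m A) => P; rewrite !mxE Aji => h.
    have : (g1 * g1 * g2) * P j i = 0 by first [ rewrite -h; ring | apply: oppr_inj; rewrite oppr0 -h; ring ].
    by move/eqP; rewrite !mulf_eq0 (negPf g20) (negPf g10) /= => /eqP.
Qed.
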